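(* Let $G=(V,E)$ be a finite, connected, undirected graph with $n\ge2$ vertices, let $r>0$, let $(X_i)_{i\ge0}$ be the Moran process on $G$ with fitness $r$, and let $\emptyset\subsetneq S\subsetneq V$. If $r\ge1$ then $$\mathbb{E}[\phi(X_{i+1})-\phi(X_i)\mid X_i=S]\ \ge\ \Big(1-\frac1r\Big)\frac{1}{n^3},$$ with equality if and only if $r=1$. If $r<1$ then $$\mathbb{E}[\phi(X_{i+1})-\phi(X_i)\mid X_i=S]\ <\ \frac{r-1}{n^3}.$$
   Context: The Moran process on $G$ with mutant fitness $r>0$ is the Markov chain $(X_i)_{i\ge0}$ whose state $X_i\subseteq V$ is the set of vertices occupied by mutants; every other vertex is occupied by a non-mutant of fitness $1$. Write $W(S)=r|S|+|V\setminus S|$ for the total fitness. Given $X_i=S$, one step is: choose a vertex $x$ with probability $r/W(S)$ if $x\in S$ and $1/W(S)$ if $x\notin S$; then choose a neighbour $y$ of $x$ uniformly at random; set $X_{i+1}=S\cup\{y\}$ if $x\in S$ and $X_{i+1}=S\setminus\{y\}$ if $x\notin S$. The potential of a set $X\subseteq V$ is $\phi(X)=\sum_{x\in X}\frac{1}{\deg x}$. *)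

(* Defs.v *)
From HB Require Import structures.
From mathcomp Require Import all_boot all_order all_algebra.
Set Implicit Arguments. Unset Strict Implicit. Unset Printing Implicit Defensive.
Import Order.TTheory GRing.Theory Num.Theory.
Local Open Scope ring_scope.

Definition simple_graph (T : finType) (e : rel T) : Prop :=
  symmetric e /\ irreflexive e.
Definition connected_graph (T : finType) (e : rel T) : Prop :=
  forall x y : T, connect e x y.

Definition deg (T : finType) (e : rel T) (x : T) : nat := #|[set y | e x y]|.

Definition potential (R : realFieldType) (T : finType) (e : rel T)
  (X : {set T}) : R := \sum_(x in X) ((deg e x)%:R)^-1.

Definition fitness (R : realFieldType) (T : finType) (r : R) (S : {set T}) : R :=
  r * (#|S|)%:R + (#|~: S|)%:R.

Definition choose_prob (R : realFieldType) (T : finType) (r : R)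
  (S : {set T}) (x : T) : R :=
  (if x \in S then r else 1) / fitness r S.

Definition moran_next (T : finType) (S : {set T}) (x y : T) : {set T} :=
  if x \in S then y |: S else S :\ y.

(* E[phi(X_{i+1}) - phi(X_i) | X_i = S]: x chosen with choose_prob,
   y uniform among neighbours of x *)
Definition exp_pot_change (R : realFieldType) (T : finType) (e : rel T)
  (r : R) (S : {set T}) : R :=
  \sum_(x : T) \sum_(y : T | e x y)
     choose_prob r S x * ((deg e x)%:R)^-1 *
     (potential R e (moran_next S x y) - potential R e S).

(* Main.v *)
Require Import Defs.
From HB Require Import structures.
From mathcomp Require Import all_boot all_order all_algebra.
From mathcomp Require Import ring lra.
Import Order.TTheory GRing.Theory Num.Theory.
Local Open Scope ring_scope.

Lemma boundary_edge (T : finType) (e : rel T) (S : {set T}) x y :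
  connect e x y -> x \in S -> y \notin S ->
  exists u v, [/\ e u v, u \in S & v \notin S].
Proof.
move=> /connectP [p pth ->]; elim: p x pth => [|z p IH] x /= pth xS yS.
  by rewrite xS in yS.
move/andP: pth => [exz pth].
case zS: (z \in S); first exact: IH pth zS yS.
by exists x, z; rewrite exz xS zS.
Qed.

Section S.
Variables (R : realFieldType) (T : finType) (e : rel T) (r : R) (S : {set T}).
Hypothesis esym : symmetric e.
Let d (x : T) : R := ((deg e x)%:R)^-1.
Let W := fitness r S.
Let P x y : R := if (x \in S) && (y \notin S) then d x * d y else 0.
Definition Bsum := \sum_(x : T) \sum_(y : T | e x y) P x y.

Lemma term_eq x y : e x y ->
  choose_prob r S x * ((deg e x)%:R)^-1 *
     (potential R e (moran_next S x y) - potential R e S)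
  = r / W * P x y - 1 / W * P y x.
Proof.
move=> exy; rewrite /P /moran_next /choose_prob /potential -/W.
case xS: (x \in S); case yS: (y \in S) => /=.
- have -> : y |: S = S by apply/setP => z; rewrite !inE; case: eqP => // ->.
  by rewrite subrr !mulr0 subrr.
- rewrite big_setU1 ?yS //= addrK /d; ring.
- rewrite [in X in _ * (_ - X)](big_setD1 y) //= /d; ring.
- have -> : S :\ y = S by apply/setP => z; rewrite !inE; case: eqP => // ->; rewrite yS.
  by rewrite subrr !mulr0 subrr.
Qed.

Lemma exp_eq : exp_pot_change e r S = (r - 1) / W * Bsum.
Proof.
rewrite /exp_pot_change.
have H1 : forall x, \sum_(y | e x y) choose_prob r S x / (deg e x)%:R *
        (potential R e (moran_next S x y) - potential R e S) =
   \sum_(y | e x y) (r / W * P x y - 1 / W * P y x).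
  by move=> x; apply: eq_bigr => y exy; rewrite term_eq.
under eq_bigr => x _ do rewrite H1.
under eq_bigr => x _ do rewrite sumrB -!mulr_sumr.
rewrite sumrB -!mulr_sumr.
have -> : \sum_x \sum_(y | e x y) P y x = Bsum.
  rewrite /Bsum.
  rewrite (eq_bigr (fun x => \sum_y (if e x y then P y x else 0))); last by move=> *; rewrite big_mkcond.
  rewrite exchange_big /=; apply eq_bigr => x _; rewrite [RHS]big_mkcond; apply eq_bigr => y _.
  by rewrite esym.
rewrite -/Bsum; ring.
Qed.
End S.

Lemma deg_bounds (T : finType) (e : rel T) u v :
  irreflexive e -> e u v -> (0 < deg e u)%N /\ (deg e u < #|T|)%N.
Proof.
move=> irr euv; split.
  by apply/card_gt0P; exists v; rewrite inE.
rewrite /deg -cardsT; apply: proper_card; rewrite properT; apply/eqP => H.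
by have := in_setT u; rewrite -H inE irr.
Qed.

Lemma inv_gt (R : realFieldType) (k : nat) (n : R) : (0 < k)%N -> k%:R < n ->
  n^-1 < (k%:R)^-1.
Proof.
move=> k0 kn; have k0' : (0 : R) < k%:R by rewrite ltr0n.
by rewrite ltf_pV2 // posrE; apply: lt_trans kn.
Qed.

Theorem lemma3 (R : realFieldType) (T : finType) (e : rel T)
  (r : R) (S : {set T}) :
  simple_graph e -> connected_graph e -> (2 <= #|T|)%N ->
  0 < r -> S != set0 -> S != setT ->
  let n : R := (#|T|)%:R in
  (1 <= r ->
     (1 - r^-1) / n ^+ 3 <= exp_pot_change e r S /\
     (exp_pot_change e r S = (1 - r^-1) / n ^+ 3 <-> r = 1)) /\
  (r < 1 -> exp_pot_change e r S < (r - 1) / n ^+ 3).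
Proof.
move=> [esym irr] conn n2 r0 S0 ST n.
rewrite exp_eq //.
set B := Bsum R T e S.
set W := fitness r S.
have [x xS] : exists x, x \in S by apply/set0Pn.
have [y yS] : exists y, y \notin S.
  by move: ST; rewrite eqEsubset subsetT /= => /subsetPn [y _ ?]; exists y.
have [u [v [euv uS vS]]] := @boundary_edge _ e S x y (conn x y) xS yS.
have [du0 dun] := @deg_bounds _ e u v irr euv.
have [dv0 dvn] : (0 < deg e v)%N /\ (deg e v < #|T|)%N by apply: (@deg_bounds _ e v u irr); rewrite esym.
have Bpos : ((deg e u)%:R^-1 * (deg e v)%:R^-1 : R) <= B.
  rewrite /B /Bsum (bigD1 u) //=; rewrite (bigD1 v) //= uS vS /=.
  rewrite -addrA lerDl addr_ge0 //.
    by apply: sumr_ge0 => z _; case: ifP => // _; rewrite mulr_ge0 // invr_ge0 ler0n.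
  apply: sumr_ge0 => z _; apply: sumr_ge0 => w _; case: ifP => // _.
  by rewrite mulr_ge0 // invr_ge0 ler0n.
have n0 : 0 < n by rewrite /n ltr0n; apply: leq_trans n2.
have iu' : n^-1 < (deg e u)%:R^-1 by apply: (@inv_gt R _ n du0); rewrite /n ltr_nat.
have iv' : n^-1 < (deg e v)%:R^-1 by apply: (@inv_gt R _ n dv0); rewrite /n ltr_nat.
have Bn : 1 < B * n ^+ 2.
  have h : n^-1 * n^-1 < (deg e u)%:R^-1 * (deg e v)%:R^-1.
    by apply: ltr_pM => //; rewrite invr_ge0 ltW.
  have h2 : 1 < (deg e u)%:R^-1 * (deg e v)%:R^-1 * n ^+ 2.
    have e1 : n^-1 * n^-1 * n ^+ 2 = 1 by field; rewrite gt_eqF.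
    by rewrite -[X in X < _]e1 ltr_pM2r ?exprn_gt0.
  by apply: lt_le_trans h2 _; rewrite ler_pM2r ?exprn_gt0.
have cS : (#|S|%:R : R) + (#|~: S|)%:R = n by rewrite -natrD cardsC.
have S1 : (1 : R) <= #|S|%:R by rewrite ler1n card_gt0.
have C0 : (0 : R) <= #|~: S|%:R by rewrite ler0n.
have W0 : 0 < W by rewrite /W /fitness; nra.
have key : forall c, 0 < c -> W <= c * n -> c^-1 / n^+3 < B / W.
  move=> c c0 Wc; rewrite ltr_pdivlMr // -invfM mulrC ltr_pdivrMr ?mulr_gt0 ?exprn_gt0 //.
  have h : 0 < (B * n ^+ 2 - 1) * (c * n) by rewrite mulr_gt0 ?subr_gt0 ?mulr_gt0.
  have -> : n ^+ 3 = n ^+ 2 * n by rewrite exprS mulrC.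
  nra.
have E1 : (r - 1) / W * B = (r - 1) * (B / W) by rewrite mulrA mulrAC.
rewrite E1; split => [r1|r1].
  have E2 : (1 - r^-1) / n ^+ 3 = (r - 1) * (r^-1 / n ^+ 3).
    by field; rewrite ?gt_eqF ?exprn_gt0 //; apply/andP; split; rewrite gt_eqF ?exprn_gt0.
  have k := key r r0 (_ : W <= r * n).
  have {k} k : r^-1 / n^+3 < B / W by apply: k; rewrite /W /fitness -cS; nra.
  rewrite E2; case: (eqVneq r 1) => [->|rn1].
    by rewrite subrr !mul0r.
  have rg : 0 < r - 1 by rewrite subr_gt0 lt_neqAle eq_sym rn1.
  have lt : (r - 1) * (r^-1 / n ^+ 3) < (r - 1) * (B / W) by rewrite ltr_pM2l.
  split; first exact: ltW.
  split=> [Heq|/eqP]; last by rewrite (negbTE rn1).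
  by move: lt; rewrite Heq ltxx.
have k := key 1 ltr01 (_ : W <= 1 * n).
have {k} k : 1^-1 / n^+3 < B / W by apply: k; rewrite /W /fitness -cS; nra.
rewrite invr1 mul1r in k.
have -> : (r - 1) / n ^+ 3 = (r - 1) * (1 / n ^+ 3) by rewrite mul1r.
by rewrite mul1r ltr_nM2l // subr_lt0.
Qed.
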